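(* Let $U:\mathbb{C}^*\to\mathbb{C}$ be a reasonable expansion with unique restrictions, between locally small categories, which has the expansion property. Assume that all morphisms in $\mathbb{C}$ are monomorphisms and that $\mathbb{C}^*$ is directed. Let $A\in\mathrm{Ob}(\mathbb{C})$, let $\mathcal{A}_1,\dots,\mathcal{A}_n\in U^{-1}(A)$ be distinct, and assume $t_i=t_{\mathbb{C}^*}(\mathcal{A}_i)\in\mathbb{N}$ for $i\in\{1,\dots,n\}$. Then $t_{\mathbb{C}}(A)\ge\sum_{i=1}^n t_i$.
   Context: Write $X\to Y$ if $\hom(X,Y)\ne\varnothing$; a category is directed if for all objects $A,B$ there is $C$ with $A\to C$, $B\to C$. An expansion of $\mathbb{C}$ is a category $\mathbb{C}^*$ with a functor $U:\mathbb{C}^*\to\mathbb{C}$ surjective on objects and injective on hom-sets; we regard $\hom_{\mathbb{C}^*}(\mathcal{A},\mathcal{B})\subseteq\hom_{\mathbb{C}}(U\mathcal{A},U\mathcal{B})$, and $U^{-1}(A)=\{\mathcal{A}:U(\mathcal{A})=A\}$. $U$ is reasonable if for every $e\in\hom(A,B)$ and $\mathcal{A}\in U^{-1}(A)$ there is $\mathcal{B}\in U^{-1}(B)$ with $e\in\hom(\mathcal{A},\mathcal{B})$; it has unique restrictions if for every $\mathcal{B}$ and $e\in\hom(A,U(\mathcal{B}))$ there is exactly one $\mathcal{A}\in U^{-1}(A)$ with $e\in\hom(\mathcal{A},\mathcal{B})$; it has the expansion property if for every $A\in\mathrm{Ob}(\mathbb{C})$ there is $B\in\mathrm{Ob}(\mathbb{C})$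 with $\mathcal{A}\to\mathcal{B}$ for all $\mathcal{A}\in U^{-1}(A)$, $\mathcal{B}\in U^{-1}(B)$. In a category $\mathbb{D}$: $C\to(B)^A_{k,t}$ means that for every $\chi:\hom(A,C)\to\{0,\dots,k-1\}$ there is $w\in\hom(B,C)$ with $|\chi(w\cdot\hom(A,B))|\le t$; $t_{\mathbb{D}}(A)$ is the least positive $n$ such that for all $k\ge2$ and all $B$ there is $C$ with $C\to(B)^A_{k,n}$, and $\infty$ otherwise. *)

(* Defs.v *)
From HB Require Import structures.
From mathcomp Require Import all_boot all_order.
From mathcomp Require Import boolp.
From Stdlib Require Import ProofIrrelevance.

Set Implicit Arguments.
Unset Strict Implicit.
Unset Printing Implicit Defensive.

(* A (locally small) category: hom-sets are types. Composition is written
   [comp g f] = g . f  (first f, then g). *)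
Record Category := {
  Obj : Type;
  Hom : Obj -> Obj -> Type;
  idm : forall X, Hom X X;
  comp : forall X Y Z, Hom Y Z -> Hom X Y -> Hom X Z;
  comp_assoc : forall X Y Z W (h : Hom Z W) (g : Hom Y Z) (f : Hom X Y),
      comp h (comp g f) = comp (comp h g) f;
  comp_id_l : forall X Y (f : Hom X Y), comp (idm Y) f = f;
  comp_id_r : forall X Y (f : Hom X Y), comp f (idm X) = f
}.

Arguments Hom : clear implicits.
Arguments idm {c} X.
Arguments comp {c X Y Z} _ _.

Definition arrow (D : Category) (X Y : Obj D) : Prop := inhabited (Hom D X Y).

Definition directed (D : Category) : Prop :=
  forall X Y : Obj D, exists Z, arrow X Z /\ arrow Y Z.

Definition all_mono (D : Category) : Prop :=
  forall (X Y Z : Obj D) (f : Hom D Y Z) (g h : Hom D X Y),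
    comp f g = comp f h -> g = h.

Definition ramsey_arrow (D : Category) (C B A : Obj D) (k t : nat) : Prop :=
  forall chi : Hom D A C -> 'I_k,
    exists w : Hom D B C,
      #|[set i : 'I_k | `[< exists f : Hom D A B, chi (comp w f) = i >] ]| <= t.

Definition ramsey_prop (D : Category) (A : Obj D) (n : nat) : Prop :=
  forall k, 2 <= k -> forall B : Obj D, exists C : Obj D, ramsey_arrow C B A k n.

(* t_D(A): least positive n with ramsey_prop, None encodes infinity. *)
Definition t_deg (D : Category) (A : Obj D) : option nat :=
  let P := fun n => `[< 0 < n /\ ramsey_prop A n >] in
  match pselect (exists n, P n) with
  | left h => Some (ex_minn h)
  | right _ => None
  end.

Definition le_inf (n : nat) (x : option nat) : Prop :=
  match x with None => True | Some m => n <= m end.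

(* An expansion of C, with hom_{C*}(X,Y) regarded as a subset of
   hom_C(U X, U Y); U is the identity on morphisms. *)
Unset Implicit Arguments.
Record Expansion (C : Category) := {
  OS : Type;
  U : OS -> Obj C;
  memE : forall X Y : OS, Hom C (U X) (U Y) -> Prop;
  memE_id : forall X, memE X X (idm (U X));
  memE_comp : forall X Y Z (g : Hom C (U Y) (U Z)) (f : Hom C (U X) (U Y)),
      memE Y Z g -> memE X Y f -> memE X Z (comp g f);
  U_surj : forall A : Obj C, exists X, U X = A
}.
Set Implicit Arguments.

Arguments OS {C} e.
Arguments U {C} e _.
Arguments memE_id {C} e X.
Arguments memE_comp {C} e {X Y Z g f} _ _.
Arguments memE {C} e {X Y} _.

Section Star.
Variables (C : Category) (E : Expansion C).

Definition homS (X Y : OS E) : Type := {f : Hom C (U E X) (U E Y) | memE E f}.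
Definition idS (X : OS E) : homS X X := exist _ _ (memE_id E X).
Definition compS (X Y Z : OS E) (g : homS Y Z) (f : homS X Y) : homS X Z :=
  exist _ _ (memE_comp E (proj2_sig g) (proj2_sig f)).

Lemma compS_assoc X Y Z W (h : homS Z W) (g : homS Y Z) (f : homS X Y) :
  compS h (compS g f) = compS (compS h g) f.
Proof. apply: eq_sig_hprop => [*|]; [exact: proof_irrelevance | exact: comp_assoc]. Qed.
Lemma compS_id_l X Y (f : homS X Y) : compS (idS Y) f = f.
Proof. apply: eq_sig_hprop => [*|]; [exact: proof_irrelevance | exact: comp_id_l]. Qed.
Lemma compS_id_r X Y (f : homS X Y) : compS f (idS X) = f.
Proof. apply: eq_sig_hprop => [*|]; [exact: proof_irrelevance | exact: comp_id_r]. Qed.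

Definition StarCat : Category :=
  Build_Category compS_assoc compS_id_l compS_id_r.
End Star.

Definition castH (C : Category) (X : Obj C) (B B' : Obj C) (h : B' = B)
  (e : Hom C X B) : Hom C X B' := eq_rect_r (fun b => Hom C X b) e h.
Definition castD (C : Category) (Y : Obj C) (A A' : Obj C) (h : A' = A)
  (e : Hom C A Y) : Hom C A' Y := eq_rect_r (fun a => Hom C a Y) e h.

Definition reasonable (C : Category) (E : Expansion C) : Prop :=
  forall (X : OS E) (B : Obj C) (e : Hom C (U E X) B),
    exists (Y : OS E) (h : U E Y = B), memE E (castH h e).

Definition unique_restrictions (C : Category) (E : Expansion C) : Prop :=
  forall (Y : OS E) (A : Obj C) (e : Hom C A (U E Y)),
    exists! X : OS E, exists h : U E X = A, memE E (castD h e).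

Definition expansion_property (C : Category) (E : Expansion C) : Prop :=
  forall A : Obj C, exists B : Obj C,
    forall X Y : OS E, U E X = A -> U E Y = B ->
      exists f : Hom C (U E X) (U E Y), memE E f.

(* Main.v *)
Require Import Defs.
From mathcomp Require Import all_boot.
From mathcomp Require Import boolp.
Set Implicit Arguments.
Unset Strict Implicit.

Lemma castDK (D : Category) (Y A A' : Obj D) (h : A' = A) (e : Hom D A' Y) :
  castD h (castD (esym h) e) = e.
Proof. by destruct h. Qed.

Lemma castD_comp (D : Category) (Y Z A A' : Obj D) (h : A' = A)
  (w : Hom D Z Y) (e : Hom D A Z) :
  castD h (Defs.comp w e) = Defs.comp w (castD h e).
Proof. by destruct h. Qed.

Lemma card_bigcup_disj (T : finType) n (F : 'I_n -> {set T}) :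
  (forall i j, i != j -> [disjoint F i & F j]) ->
  #|\bigcup_i F i| = \sum_i #|F i|.
Proof.
elim: n F => [|n IH] F HF; first by rewrite !big_ord0 cards0.
rewrite !big_ord_recr /= cardsU IH; last first.
  by move=> i j ne; apply: HF; apply: contra ne => /eqP[] h; apply/eqP/val_inj.
have -> : (\bigcup_(i < n) F (widen_ord (leqnSn n) i)) :&: F ord_max = set0.
  apply/eqP; rewrite setI_eq0 disjoint_sym; apply: bigcup_disjoint => i _.
  apply: HF; rewrite neq_ltn; apply/orP; right => /=.
  exact: ltn_ord.
by rewrite cards0 subn0.
Qed.

Lemma bound_exists (D : Category) (Hd : directed D) n (F : 'I_n -> Obj D)
  (x0 : Obj D) : exists Z, forall i, arrow (F i) Z.
Proof.
suff: forall m, exists Z, forall i : 'I_n, i < m -> arrow (F i) Z.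
  by move/(_ n) => [Z HZ]; exists Z => i; apply: HZ.
elim=> [|m [Z HZ]]; first by exists x0.
case: (ltnP m n) => hm.
  have [W [[a] [b]]] := Hd Z (F (Ordinal hm)).
  exists W => i; rewrite ltnS leq_eqVlt => /orP [/eqP eq | lt].
    have -> : i = Ordinal hm by apply: val_inj.
    exact: (inhabits b).
  case: (HZ i lt) => g; exact: (inhabits (Defs.comp a g)).
exists Z => i _; apply: HZ; exact: leq_trans (ltn_ord i) hm.
Qed.

Lemma bad_exists (D : Category) (X : Obj D) t : t_deg X = Some t ->
  0 < t /\ exists k (B : Obj D), 2 <= k /\
     forall Cc : Obj D, ~ ramsey_arrow Cc B X k t.-1.
Proof.
rewrite /t_deg; case: pselect => [h|//] [<-].
case: ex_minnP => m /asboolP [m0 Rm] minm; split => //.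
case: m m0 Rm minm => [//|[|m]] _ Rm minm.
  exists 2, X; split => // Cc RA.
  have [w Hw] := RA (fun _ => ord0).
  move: Hw; rewrite leqn0 cards_eq0 => /eqP/setP/(_ ord0).
  rewrite inE in_set0 => /asboolP; apply.
  by exists (idm X).
apply: contrapT => H.
have : m.+2 <= m.+1; last by rewrite ltnn.
apply: minm; apply/asboolP; split => // k hk B.
apply: contrapT => nC; apply: H; exists k, B; split => // Cc RA.
by apply: nC; exists Cc.
Qed.

Unset Implicit Arguments.
From Stdlib Require Import ProofIrrelevance.

Theorem lemma6p2 (C : Category) (E : Expansion C)
  (Hreas : reasonable E) (Huniq : unique_restrictions E)
  (Hexp : expansion_property E)
  (Hmono : all_mono C) (Hdir : directed (StarCat E))
  (A : Obj C) (n : nat) (As : 'I_n -> OS E) (Ainj : injective As)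
  (HA : forall i, U E (As i) = A)
  (t : 'I_n -> nat)
  (Ht : forall i, t_deg (D := StarCat E) (As i) = Some (t i)) :
  le_inf (\sum_(i < n) t i) (t_deg A).
Proof.
rewrite /le_inf /t_deg; case: pselect => [h|//].
case: ex_minnP => m /asboolP [m0 Rm] _.
rewrite leqNgt; apply/negP => Hlt.
case: n As Ainj HA t Ht Hlt => [|n'] As Ainj HA t Ht Hlt.
  by rewrite big_ord0 in Hlt.
set n := n'.+1.
have i0 : 'I_n := ord0.
have Hb : forall i, exists p : nat * OS E, 2 <= p.1 /\
   forall Cc, ~ @ramsey_arrow (StarCat E) Cc p.2 (As i) p.1 (t i).-1.
  move=> i; have [_ [k [B [hk HB]]]] := bad_exists (Ht i).
  by exists (k, B).
have tpos : forall i, 0 < t i by move=> i; case: (bad_exists (Ht i)).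
have [p Hp] := fin_all_exists Hb.
pose kf i := (p i).1. pose Bf i := (p i).2.
have [Bstar HBstar] := bound_exists Hdir Bf (Bf i0).
have [B HB] := Hexp (U E Bstar).
pose k0 := \max_i kf i.
have Hk : forall i, kf i <= k0 by move=> i; apply: leq_bigmax.
pose T := option ('I_n * 'I_k0)%type.
have hK : 2 <= #|{: T}|.
  rewrite card_option card_prod !card_ord ltnS muln_gt0 /=.
  by apply: leq_trans (Hk i0); case: (Hp i0) => /ltnW.
have [Cc RA] := Rm _ hK B.
case: (@U_surj _ E Cc) => Cs hCs; subst Cc.
have Hc : forall i, exists chi : Hom (StarCat E) (As i) Cs -> 'I_(kf i),
   forall w : Hom (StarCat E) (Bf i) Cs,
     (t i).-1 < #|[set j : 'I_(kf i) | `[< exists f : Hom (StarCat E) (As i) (Bf i),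
                  chi (Defs.comp w f) = j >] ]|.
  move=> i; have [_ /(_ Cs)] := Hp i.
  move/existsNP => [chi Hchi]; exists chi => w.
  rewrite ltnNge; apply/negP => hw; apply: Hchi; by exists w.
have [chif Hchif] := fin_all_exists Hc.
pose chi' (e : Hom C A (U E Cs)) : T :=
  if [pick i | `[< Defs.memE E (castD (HA i) e) >] ] is Some i then
    match pselect (Defs.memE E (castD (HA i) e)) with
    | left h => Some (i, widen_ord (Hk i) (chif i (exist _ _ h)))
    | right _ => None
    end
  else None.
have key : forall i (g : homS (As i) Cs),
    chi' (castD (esym (HA i)) (proj1_sig g)) = Some (i, widen_ord (Hk i) (chif i g)).
  move=> i g; rewrite /chi'.
  case: pickP => [j Hj | none]; last first.
    by move: (none i) => /asboolP []; rewrite castDK; exact: (proj2_sig g).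
  have eji : j = i.
    apply: Ainj.
    have [X [_ uX]] := Huniq Cs A (castD (esym (HA i)) (proj1_sig g)).
    rewrite -(uX (As j)); last by exists (HA j); apply/asboolP.
    apply: uX; exists (HA i); rewrite castDK; exact: (proj2_sig g).
  subst j.
  case: pselect => [h'|nh]; last by move/asboolP: Hj.
  congr (Some (i, widen_ord (Hk i) (chif i _))); apply: eq_sig_hprop => [*|]; first exact: proof_irrelevance.
  by rewrite /= castDK.
have [w Hw] := RA (fun e => enum_rank (chi' e)).
have [B' [[hB hw] _]] := Huniq Cs B w.
subst B.
have [fB hfB] := HB Bstar B' erefl erefl.
pose wS : homS B' Cs := exist _ w hw.
pose fS : homS Bstar B' := exist _ fB hfB.
have : forall i, exists g : homS (Bf i) Bstar, True.
  by move=> i; case: (HBstar i) => g; exists g.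
case/fin_all_exists => g _.
pose S' := [set x : T | `[< exists f : Hom C A (U E B'), chi' (Defs.comp w f) = x >] ].
pose Si i := [set j : 'I_(kf i) | `[< exists f : homS (As i) (Bf i),
    chif i (compS (compS wS (compS fS (g i))) f) = j >] ].
pose F i := [set (Some (i, widen_ord (Hk i) c) : T) | c in Si i].
have h1 : \sum_i t i <= \sum_i #|F i|.
  apply: leq_sum => i _.
  rewrite card_imset; last first.
    by move=> c c' [] hc; apply: val_inj; exact: hc.
  have := Hchif i (compS wS (compS fS (g i))).
  by rewrite -(prednK (tpos i)).
have h2 : \sum_i #|F i| = #|\bigcup_i F i|.
  rewrite card_bigcup_disj // => i j ne.
  rewrite -setI_eq0; apply/eqP/setP => x; rewrite !inE.
  apply/negP => /andP [/imsetP [c _ ->] /imsetP [c' _ [eij _]]].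
  by rewrite eij eqxx in ne.
have h3 : \bigcup_i F i \subset S'.
  apply/bigcupsP => i _; apply/subsetP => x /imsetP [c]; rewrite inE.
  move=> /asboolP [f hf] ->; rewrite inE; apply/asboolP.
  exists (castD (esym (HA i)) (Defs.comp (Defs.comp fB (proj1_sig (g i))) (proj1_sig f))).
  rewrite -castD_comp comp_assoc -hf.
  exact: (key i (compS (compS wS (compS fS (g i))) f)).
have h4 : #|S'| <= #|[set j : 'I_#|{: T}| | `[< exists f : Hom C A (U E B'),
     enum_rank (chi' (Defs.comp w f)) = j >] ]|.
  rewrite -(card_imset _ (@enum_rank_inj _)); apply: subset_leq_card.
  apply/subsetP => y /imsetP [x]; rewrite inE => /asboolP [f hf] ->.
  by rewrite inE; apply/asboolP; exists f; rewrite hf.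
have := leq_trans (leq_trans h1 (eq_leq h2)) (leq_trans (subset_leq_card h3) h4).
move=> hh; have := leq_trans hh Hw.
by rewrite leqNgt Hlt.
Qed.
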